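(* Let $\mathcal{C}=\{C_1,\dots,C_m\}$ be a family of chargers and $\mathcal{R}=\{R_1,\dots,R_n\}$ a nonempty family ($n\ge 1$) of receivers, placed in the plane so that the placement constraints hold. If $\mathbf{x}^*\in[0,1]^m$ is an optimal solution to MAX-POWER, i.e. $\mathbf{x}^*\in\arg\max_{\mathbf{x}\in[0,1]^m} P(\mathcal{C}(\mathbf{x}),\mathcal{R})$, then $\mathbf{x}^*\in\{0,1\}^m$. In particular, there exists an optimal solution to MAX-POWER in which every charger operates either at full capacity ($\mathbf{x}_j=1$) or not at all ($\mathbf{x}_j=0$).
   Context: Fixed constants $\lambda>0$ (wavelength), $\beta>0$, $\gamma>0$. For a charger $C$ and receiver $R$ at Euclidean distance $d=\mathrm{dist}(C,R)$, the electric field vector is $\mathbf{E}(C,R)=\beta\cdot\frac{1}{d}\cdot\big(\cos(\tfrac{2\pi}{\lambda}d),\ \sin(\tfrac{2\pi}{\lambda}d)\big)^T\in\mathbb{R}^2$. A configuration is a vector $\mathbf{x}\in[0,1]^m$, $\mathbf{x}_j$ being the operation level of charger $C_j$. The power received by $R$ under configuration $\mathbf{x}$ is $P(\mathcal{C}(\mathbf{x}),R)=\gamma\,\big\|\sum_{j=1}^m \mathbf{x}_j\,\mathbf{E}(C_j,R)\big\|^2$ (Euclidean norm), and for a set $A$ of receivers $P(\mathcal{C}(\mathbf{x}),A)=\sum_{R\in A}P(\mathcal{C}(\mathbf{x}),R)$. Placement constraints: $\mathrm{dist}(C,R)\ge\lambda$ for every charger $C$ and receiver $R$, and $\mathrm{dist}(R,R')\ge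 \frac{\lambda}{2\pi}$ for every pair of distinct receivers $R,R'$. MAX-POWER: find $\mathbf{x}^*\in\arg\max_{\mathbf{x}\in[0,1]^m}P(\mathcal{C}(\mathbf{x}),\mathcal{R})$. *)

(* Defs.v *)
From HB Require Import structures.
From mathcomp Require Import all_boot all_order all_algebra.
From mathcomp Require Import all_classical all_reals all_analysis.
Set Implicit Arguments. Unset Strict Implicit. Unset Printing Implicit Defensive.
Import Order.TTheory GRing.Theory Num.Theory.
Local Open Scope ring_scope.

Definition dist {R : realType} (p q : R * R) : R :=
  Num.sqrt ((p.1 - q.1) ^+ 2 + (p.2 - q.2) ^+ 2).

Definition norm2 {R : realType} (v : R * R) : R :=
  Num.sqrt (v.1 ^+ 2 + v.2 ^+ 2).

Definition efield {R : realType} (lambda beta : R) (C Rc : R * R) : R * R :=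
  let d := dist C Rc in
  (beta * d^-1 * cos (2 * pi / lambda * d), beta * d^-1 * sin (2 * pi / lambda * d)).

Definition power_at {R : realType} (lambda beta gamma : R) (m : nat)
  (C : 'I_m -> R * R) (x : 'I_m -> R) (Rc : R * R) : R :=
  gamma * norm2 (\sum_(j < m) x j * (efield lambda beta (C j) Rc).1,
                 \sum_(j < m) x j * (efield lambda beta (C j) Rc).2) ^+ 2.

Definition power {R : realType} (lambda beta gamma : R) (m n : nat)
  (C : 'I_m -> R * R) (Rs : 'I_n -> R * R) (x : 'I_m -> R) : R :=
  \sum_(i < n) power_at lambda beta gamma C x (Rs i).

Definition in_cube {R : realType} (m : nat) (x : 'I_m -> R) : Prop :=
  forall j, 0 <= x j <= 1.

(* Main.v *)
Require Import Defs.
From HB Require Import structures.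
From mathcomp Require Import all_boot all_order all_algebra.
From mathcomp Require Import all_classical all_reals all_analysis.
From mathcomp Require Import ring lra.
Import Order.TTheory GRing.Theory Num.Theory.
Local Open Scope ring_scope.

Lemma split_sum (R : realType) (m : nat) (xs f : 'I_m -> R) (j : 'I_m) (t : R) :
  \sum_(k < m) (if k == j then t else xs k) * f k =
  t * f j + \sum_(k < m | k != j) xs k * f k.
Proof.
rewrite (bigD1 j) //= eqxx; congr (_ + _); apply: eq_bigr => k /negbTE -> //.
Qed.

Lemma norm2_sq (R : realType) (v : R * R) : norm2 v ^+ 2 = v.1 ^+ 2 + v.2 ^+ 2.
Proof. by rewrite /norm2 sqr_sqrtr // addr_ge0 // sqr_ge0. Qed.

Theorem lemma1 (R : realType) (lambda beta gamma : R)
  (Hlambda : 0 < lambda) (Hbeta : 0 < beta) (Hgamma : 0 < gamma)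
  (m n : nat) (Hn : (0 < n)%N)
  (C : 'I_m -> R * R) (Rs : 'I_n -> R * R)
  (HCR : forall j i, lambda <= dist (C j) (Rs i))
  (HRR : forall i k, i != k -> lambda / (2 * pi) <= dist (Rs i) (Rs k))
  (xs : 'I_m -> R)
  (Hxs : in_cube xs)
  (Hopt : forall x : 'I_m -> R, in_cube x ->
            power lambda beta gamma C Rs x <= power lambda beta gamma C Rs xs) :
  forall j, xs j = 0 \/ xs j = 1.
Proof.
move=> j.
set xt := fun t : R => fun k : 'I_m => if k == j then t else xs k.
have Exs : xs = xt (xs j).
  by apply: funext => k; rewrite /xt; case: eqP => // ->.
set e1 := fun i k => (efield lambda beta (C k) (Rs i)).1.
set e2 := fun i k => (efield lambda beta (C k) (Rs i)).2.
set a := fun i => \sum_(k < m | k != j) xs k * e1 i k.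
set c := fun i => \sum_(k < m | k != j) xs k * e2 i k.
set g := fun t => \sum_(i < n) gamma * ((t * e1 i j + a i) ^+ 2 + (t * e2 i j + c i) ^+ 2).
have Pg : forall t, power lambda beta gamma C Rs (xt t) = g t.
  move=> t; rewrite /power /g; apply: eq_bigr => i _.
  by rewrite /power_at norm2_sq /= /xt !split_sum.
have key : forall t, (1 - t) * g 0 + t * g 1 - g t =
   t * (1 - t) * \sum_(i < n) gamma * (e1 i j ^+ 2 + e2 i j ^+ 2).
  move=> t; rewrite /g !mulr_sumr -big_split -sumrB /=.
  by apply: eq_bigr => i _; ring.
have Spos : 0 < \sum_(i < n) gamma * (e1 i j ^+ 2 + e2 i j ^+ 2).
  rewrite (bigD1 (Ordinal Hn)) //=; apply: ltr_pwDl; last first.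
    by apply: sumr_ge0 => i _; apply: mulr_ge0; [exact: ltW | rewrite addr_ge0 // sqr_ge0].
  apply: mulr_gt0 => //.
  rewrite /e1 /e2 /efield /=.
  set d := dist _ _; set th := 2 * pi / lambda * d.
  have dpos : 0 < d by apply: lt_le_trans (HCR _ _).
  have -> : (beta * d^-1 * cos th) ^+ 2 + (beta * d^-1 * sin th) ^+ 2
            = (beta * d^-1) ^+ 2 * (cos th ^+ 2 + sin th ^+ 2) by ring.
  by rewrite cos2Dsin2 mulr1 exprn_gt0 // mulr_gt0 // invr_gt0.
have cube : forall t, 0 <= t <= 1 -> in_cube (xt t).
  by move=> t Ht k; rewrite /xt; case: eqP => _ //; apply: Hxs.
have H0 := Hopt _ (cube 0 ltac:(lra)).
have H1 := Hopt _ (cube 1 ltac:(lra)).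
rewrite Exs !Pg in H0 H1.
have := Hxs j; set t := xs j => /andP [t0 t1].
have := key t.
case: (eqVneq t 0) => [->|tn0]; first by left.
case: (eqVneq t 1) => [->|tn1]; first by right.
have tp : 0 < t by rewrite lt_neqAle eq_sym tn0.
have tq : 0 < 1 - t by rewrite subr_gt0 lt_neqAle tn1.
have := mulr_gt0 (mulr_gt0 tp tq) Spos.
move: (g 0) (g 1) (g t) H0 H1 => g0 g1 gt H0 H1 Hp Hk.
exfalso.
have : (1 - t) * g0 <= (1 - t) * gt by rewrite ler_pM2l.
have : t * g1 <= t * gt by rewrite ler_pM2l.
lra.
Qed.
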